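(* Let $X$ be a real Banach space and $Y$ a finite dimensional real Banach space. The following are equivalent: (1) for every finite dimensional subspace $Z$ of $X$ and every $\varepsilon>0$ there is an operator $T\in L(Y,X)$ with $\|T\|=1$ such that $\|z+T(y)\|\ge(1-\varepsilon)(\|z\|+\|y\|)$ for all $y\in Y$, $z\in Z$; (2) for every finite sets $\{z_1,\dots,z_n\}\subseteq S_X$, $\{y_1,\dots,y_m\}\subseteq S_Y$ and every $\varepsilon>0$ there is an operator $T\in L(Y,X)$ with $\|T\|=1$ such that $\|z_i+T(y_j)\|>2-\varepsilon$ for all $1\le i\le n$, $1\le j\le m$.
   Context: $S_W$ denotes the unit sphere of a Banach space $W$; $L(Y,X)$ is the space of bounded linear operators from $Y$ to $X$ with the operator norm. *)

(* Defs.v *)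
From HB Require Import structures.
From mathcomp Require Import all_boot all_order all_algebra.
From mathcomp Require Import all_classical all_reals all_analysis.
Set Implicit Arguments. Unset Strict Implicit. Unset Printing Implicit Defensive.
Import Order.TTheory GRing.Theory Num.Theory.
Import numFieldNormedType.Exports.
Local Open Scope classical_set_scope.
Local Open Scope ring_scope.

Definition is_subspace {R : realType} {V : normedModType R} (Z : set V) : Prop :=
  Z 0 /\ forall (a : R) (x y : V), Z x -> Z y -> Z (a *: x + y).

Definition fin_dim_set {R : realType} {V : normedModType R} (Z : set V) : Prop :=
  exists (n : nat) (s : 'I_n -> V), (forall i, Z (s i)) /\
    forall z, Z z -> exists c : 'I_n -> R, z = \sum_(i < n) c i *: s i.

Definition opnorm {R : realType} {Y X : normedModType R} (T : Y -> X) : R :=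
  sup [set `|T y| | y in [set y : Y | `|y| <= 1]].

(* Main.v *)
Require Import Defs.
From HB Require Import structures.
From mathcomp Require Import all_boot all_order all_algebra.
From mathcomp Require Import all_classical all_reals all_analysis.
From mathcomp Require Import lra.
From mathcomp Require Import finmap.
Import Order.TTheory GRing.Theory Num.Theory.
Import numFieldNormedType.Exports.
Local Open Scope classical_set_scope.
Local Open Scope ring_scope.

Section Gen.
Context {R : realType} {V : normedModType R}.

Definition nball (M : R) : set V := [set x | `|x| <= M].

Lemma nball_closed M : closed (nball M).
Proof.
rewrite /nball -/((@Num.norm _ V) @^-1` [set x : R | x <= M]).
apply: (preimage_closed _ (@closed_le _ _)) => y _.
exact: norm_continuous.
Qed.

Lemma est (u w : V) (a b eta : R) : `|u| <= 1 -> `|w| <= 1 -> 2 - eta <= `|u + w| ->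
  0 <= a -> 0 <= b -> 0 <= eta -> (a + b) * (1 - eta) <= `|a *: u + b *: w|.
Proof.
move=> hu hw huw ha hb he.
have [ab|ba] := leP b a.
  have E : a *: u + b *: w = a *: (u + w) - (a - b) *: w.
    by rewrite scalerDr scalerBl opprB -addrA [a *: w + _]addrC subrK.
  rewrite E (le_trans _ (lerB_dist _ _)) // normrZ normrZ (ger0_norm ha) (@ger0_norm _ (a - b)); last by rewrite subr_ge0.
  have : (a - b) * `|w| <= a - b by rewrite ler_piMr // subr_ge0.
  have : a * (2 - eta) <= a * `|u + w| by rewrite ler_wpM2l.
  nra.
have E : a *: u + b *: w = b *: (u + w) - (b - a) *: u.
  by rewrite scalerDr scalerBl opprB addrAC [b *: u + _]addrC subrK.
rewrite E (le_trans _ (lerB_dist _ _)) // normrZ normrZ (ger0_norm hb) (@ger0_norm _ (b - a)); last by rewrite subr_ge0 ltW.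
have : (b - a) * `|u| <= b - a by rewrite ler_piMr // subr_ge0 ltW.
have : b * (2 - eta) <= b * `|u + w| by rewrite ler_wpM2l.
nra.
Qed.
End Gen.

Section Gen2.
Context {R : realType} {V : normedModType R}.

Lemma net (K : set V) (d : R) : compact K -> 0 < d ->
  exists N (p : 'I_N -> V), (forall i, K (p i)) /\
     forall x, K x -> exists i, `|x - p i| < d.
Proof.
move=> cK d0; rewrite compact_cover in cK.
have [D' sD cov] := cK V K (fun x => ball x d) (fun x _ => @ball_open _ _ x d)
   (fun x Kx => @ex_intro2 _ K (fun i => ball i d x) x Kx (ballxx x d0)).
set s := enum_fset D'.
exists (size s), (fun i => nth 0 s i); split.
  move=> i; have : nth 0 s i \in D' by exact: mem_nth.
  by move/sD; rewrite in_setE.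
move=> x /cov [c Dc bc].
have cs : c \in s by exact: Dc.
exists (Ordinal (elimT idP (etrans (index_mem c s) cs))); rewrite /= nth_index //.
by move: bc; rewrite -ball_normE /ball_ /= distrC.
Qed.
End Gen2.

Section Gen3.
Context {R : realType} {V : normedModType R}.

Definition extS (W : set V) (v : V) : set V :=
  [set x | exists w t, W w /\ x = w + t *: v].
Definition fdc (W : set V) := closed W /\ forall M, compact (W `&` nball M).
Definition subsp (W : set V) := W 0 /\ (forall a x y, W x -> W y -> W (a *: x + y)).

Lemma fcont (v : V) : continuous (fun p : V * R => p.1 + p.2 *: v).
Proof.
move=> p; apply: continuousD; first exact: cvg_fst.
apply: continuousZr_tmp; exact: cvg_snd.
Qed.

Lemma ext_fdc W v : subsp W -> fdc W -> fdc (extS W v).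
Proof.
move=> [W0 WL] [Wc Wk].
have Wsc a x : W x -> W (a *: x) by move=> Wx; have := WL a x 0 Wx W0; rewrite addr0.
have [[del del0 hdel]|nd] := pselect (exists2 del : R, 0 < del & forall w, W w -> del <= `|v - w|); last first.
  have Wv : W v.
    apply: Wc => B /nbhs_ballP [e e0 Be].
    apply: contrapT => h; apply: nd; exists e => // w Ww.
    rewrite leNgt; apply/negP => vw; apply: h; exists w; split => //.
    by apply: Be; rewrite -ball_normE /=.
  have -> : extS W v = W.
    apply/seteqP; split => x.
      by case=> w [t [Ww ->]]; rewrite addrC; apply: WL.
    by move=> Wx; exists x, 0; rewrite scale0r addr0.
  by split.
have bnd x M : extS W v x -> `|x| <= M -> exists w t,
    [/\ W w, x = w + t *: v, `|t| <= M / del & `|w| <= M + M / del * `|v|].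
  move=> [w [t [Ww ->]]] hM; exists w, t.
  have M0 : 0 <= M by exact: le_trans hM.
  have Ht : `|t| <= M / del.
    have [->|t0] := eqVneq t 0; first by rewrite normr0 divr_ge0 // ltW.
    have hd : del <= `|v - (- t^-1 *: w)| by apply: hdel; apply: Wsc.
    have E : w + t *: v = t *: (v - (- t^-1 *: w)).
      by rewrite scaleNr opprK scalerDr scalerA mulfV // scale1r addrC.
    rewrite E normrZ in hM.
    rewrite ler_pdivlMr //; apply: le_trans hM; rewrite ler_wpM2l //.
  split => //.
  have -> : w = (w + t *: v) - t *: v by rewrite addrK.
  apply: (le_trans (ler_normB _ _)); rewrite normrZ; apply: lerD => //.
  by rewrite ler_wpM2r.
have kM M : compact (extS W v `&` nball M).
  set M1 := M + M / del * `|v|; set M2 := M / del.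
  have cK : compact ((fun p : V * R => p.1 + p.2 *: v) @` ((W `&` nball M1) `*` `[- M2, M2]%classic)).
    apply: continuous_compact; first by apply: continuous_subspaceT; exact: fcont.
    apply: compact_setX => //; exact: segment_compact.
  have -> : extS W v `&` nball M = ((fun p : V * R => p.1 + p.2 *: v) @` ((W `&` nball M1) `*` `[- M2, M2]%classic)) `&` nball M.
    apply/seteqP; split => x.
      move=> [ex hx]; have [w [t [Ww xE Ht Hw]]] := bnd x M ex hx; split => //.
      exists (w, t) => //; split => //=.
      by rewrite in_itv /= -ler_norml.
    by move=> [[[w t] [[Ww _] _] <-] hx]; split => //; exists w, t.
  apply: compact_closedI => //; exact: nball_closed.
split => // x clx.
have cC : closed (extS W v `&` nball (`|x| + 1)) by apply: compact_closed => //.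
suff : (extS W v `&` nball (`|x| + 1)) x by case.
apply: cC => B Bx.
have : nbhs x (B `&` ball x 1) by apply: filterI => //; exact: nbhsx_ballx.
move=> /clx [y [ey [By bxy]]]; exists y; split => //; split => //.
move: bxy; rewrite -ball_normE /= /nball /= => bxy.
have -> : y = x - (x - y) by rewrite opprB addrC subrK.
apply: (le_trans (ler_normB _ _)); rewrite lerD2l; exact: ltW.
Qed.
End Gen3.

Section Gen4.
Context {R : realType} {V : normedModType R}.

Definition spanS n (s : 'I_n -> V) : set V :=
  [set x | exists c : 'I_n -> R, x = \sum_(i < n) c i *: s i].
Arguments spanS {n} s.

Lemma span_subsp n (s : 'I_n -> V) : subsp (spanS s).
Proof.
split.
  by exists (fun=> 0); rewrite big1 // => i _; rewrite scale0r.
move=> a x y [cx ->] [cy ->]; exists (fun i => a * cx i + cy i).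
rewrite scaler_sumr -big_split; apply: eq_bigr => i _.
by rewrite scalerDl scalerA.
Qed.

Lemma span0 (s : 'I_0 -> V) : spanS s = [set 0].
Proof.
apply/seteqP; split => x.
  by case=> c ->; rewrite big_ord0.
by move=> /= ->; exists (fun=> 0); rewrite big_ord0.
Qed.

Lemma span_rec n (s : 'I_n.+1 -> V) :
  spanS s = extS (spanS (fun i => s (lift ord0 i))) (s ord0).
Proof.
apply/seteqP; split => x.
  case=> c ->; rewrite big_ord_recl.
  exists (\sum_(i < n) c (lift ord0 i) *: s (lift ord0 i)), (c ord0); split.
    by exists (fun i => c (lift ord0 i)).
  by rewrite addrC.
case=> w [t [[c ->] ->]].
exists (fun i => if unlift ord0 i is Some j then c j else t).
rewrite big_ord_recl unlift_none addrC; congr (_ + _).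
by apply: eq_bigr => i _; rewrite liftK.
Qed.

Lemma fdc0 : fdc [set (0 : V)].
Proof.
split; first by apply: compact_closed => //; exact: compact_set1.
move=> M; apply: compact_closedI; [exact: compact_set1 | exact: nball_closed].
Qed.

Lemma span_fdc n (s : 'I_n -> V) : fdc (spanS s).
Proof.
elim: n s => [s|n IH s]; first by rewrite span0; exact: fdc0.
rewrite span_rec; apply: ext_fdc; [exact: span_subsp | exact: IH].
Qed.

Lemma sphere_closed : closed [set x : V | `|x| = 1].
Proof.
rewrite -/((@Num.norm _ V) @^-1` [set x : R | x = 1]).
apply: (preimage_closed _ (@closed_eq _ _)) => y _.
exact: norm_continuous.
Qed.

Lemma span_sphere_compact n (s : 'I_n -> V) :
  compact (spanS s `&` [set x : V | `|x| = 1]).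
Proof.
have [Wc Wk] := span_fdc _ s.
apply: (subclosed_compact _ (Wk 1)).
  by apply: closedI => //; exact: sphere_closed.
by move=> x [Wx hx]; split => //; rewrite /nball /= hx.
Qed.
End Gen4.
Arguments spanS {R V n} s.

Section Gen5.
Context {R : realType} {Y X : normedModType R}.

Lemma opnorm_hs (T : {linear Y -> X}) : opnorm T = 1 ->
  has_sup [set `|T y| | y in [set y : Y | `|y| <= 1]].
Proof.
move=> h; apply: contrapT => hn; move: h; rewrite /opnorm sup_out //.
by move/eqP; rewrite eq_sym oner_eq0.
Qed.

Lemma opnorm_le (T : {linear Y -> X}) : opnorm T = 1 -> forall y, `|T y| <= `|y|.
Proof.
move=> h y; have hs := opnorm_hs _ h.
have [->|y0] := eqVneq y 0; first by rewrite linear0 !normr0.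
have ny : 0 < `|y| by rewrite normr_gt0.
have : `|T (`|y|^-1 *: y)| <= 1.
  rewrite -h; apply: (sup_upper_bound hs); exists (`|y|^-1 *: y) => //=.
  by rewrite normrZ normfV normr_id mulVf // gt_eqF.
rewrite linearZ normrZ normfV normr_id ler_pdivrMl // mulr1 //.
Qed.

Lemma opnorm_x0 (T : {linear Y -> X}) : opnorm T = 1 -> exists x0 : X, `|x0| = 1.
Proof.
move=> h; have hs := opnorm_hs _ h.
have [e [y0 _ <-] he] := sup_adherent (ltr01 : (0:R) < 1) hs.
rewrite /opnorm in h; rewrite h subrr in he.
exists (`|T y0|^-1 *: T y0).
by rewrite normrZ normfV normr_id mulVf // gt_eqF.
Qed.
End Gen5.

Lemma span_eq {R : realType} {V : normedModType R} (Z : set V) n (s : 'I_n -> V) :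
  is_subspace Z -> (forall i, Z (s i)) ->
  (forall z, Z z -> exists c : 'I_n -> R, z = \sum_(i < n) c i *: s i) ->
  Z = spanS s.
Proof.
move=> [Z0 ZL] Zs Zsp; apply/seteqP; split => x; first exact: Zsp.
case=> c ->; apply: (big_ind Z) => //.
  by move=> a b Za Zb; have := ZL 1 a b Za Zb; rewrite scale1r.
by move=> i _; have := ZL (c i) (s i) 0 (Zs i) Z0; rewrite addr0.
Qed.

Lemma rearr (V : zmodType) (a b c d : V) : c + d = a + b - (a - c) - (b - d).
Proof. by rewrite !opprB -addrA addrACA [a + (c - a)]addrC subrK [b + _]addrC subrK. Qed.

Theorem mainTheorem2 (R : realType) (X Y : completeNormedModType R)
  (hY : fin_dim_set (setT : set Y)) :
  (forall Z : set X, is_subspace Z -> fin_dim_set Z ->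
     forall eps : R, 0 < eps ->
     exists T : {linear Y -> X}, continuous T /\ opnorm T = 1 /\
       forall (y : Y) (z : X), Z z -> (1 - eps) * (`|z| + `|y|) <= `|z + T y|)
  <->
  (forall (n m : nat) (z : 'I_n -> X) (y : 'I_m -> Y),
     (forall i, `|z i| = 1) -> (forall j, `|y j| = 1) ->
     forall eps : R, 0 < eps ->
     exists T : {linear Y -> X}, continuous T /\ opnorm T = 1 /\
       forall i j, 2 - eps < `|z i + T (y j)|).
Proof.
split.
  move=> H1 n m z y hz hy eps e0.
  have Zz : forall i, spanS z (z i).
    move=> i; exists (fun k => if k == i then 1 else 0).
    rewrite (bigD1 i) //= eqxx scale1r big1 ?addr0 // => k /negbTE ->.
    by rewrite scale0r.
  have fd : fin_dim_set (spanS z) by exists n, z; split => // x [c ->]; exists c.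
  have e4 : 0 < eps / 4 by rewrite divr_gt0.
  have [T [Tc [Tn HT]]] := H1 (spanS z) (span_subsp _ z) fd (eps / 4) e4.
  exists T; split => //; split => // i j.
  have := HT (y j) (z i) (Zz i); rewrite hz hy => h.
  apply: lt_le_trans h; lra.
move=> H2 Z HZ [n [s [Zs Zsp]]] eps e0.
have ZE := span_eq _ _ s HZ Zs Zsp.
have [ny [sy [_ Ysp]]] := hY.
have YE : (setT : set Y) = spanS sy.
  by apply/seteqP; split => x // _; apply: Ysp.
have [T0 [_ [T0n _]]] := H2 0 0 (fun=> 0) (fun=> 0) (fun i => match i with @Ordinal _ _ h => False_ind _ (notF h) end)
  (fun i => match i with @Ordinal _ _ h => False_ind _ (notF h) end) 1 ltr01.
have [x0 hx0] := opnorm_x0 _ T0n.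
set del := eps / 3.
have d0 : 0 < del by rewrite divr_gt0.
set KZ := (spanS s `&` [set x : X | `|x| = 1]) `|` [set x0].
have cKZ : compact KZ by apply: compactU; [exact: span_sphere_compact | exact: compact_set1].
set KY := spanS sy `&` [set x : Y | `|x| = 1].
have [N [p [Kp Hp]]] := net _ _ cKZ d0.
have [M [q [Kq Hq]]] := net _ _ (span_sphere_compact _ sy) d0.
have hp i : `|p i| = 1 by case: (Kp i) => [[_ ->] | ->].
have hq j : `|q j| = 1 by case: (Kq j).
have [T [Tc [Tn HT]]] := H2 N M p q hp hq del d0.
exists T; split => //; split => // y z Zz.
have Tle := opnorm_le _ Tn.
have [->|y0] := eqVneq y 0.
  rewrite linear0 addr0 normr0 addr0; have := normr_ge0 z; nra.
have nyp : 0 < `|y| by rewrite normr_gt0.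
set yh := `|y|^-1 *: y.
have nyh : `|yh| = 1 by rewrite normrZ normfV normr_id mulVf // (gt_eqF nyp).
have [j hj] : exists j, `|yh - q j| < del.
  by apply: Hq; split => //; rewrite -YE.
set zh := if z == 0 then x0 else `|z|^-1 *: z.
have nzh : `|zh| = 1.
  rewrite /zh; case: eqP => // /eqP z0.
  by rewrite normrZ normfV normr_id mulVf // normr_eq0.
have [i hi] : exists i, `|zh - p i| < del.
  apply: Hp; rewrite /KZ /zh; case: eqP => [_|/eqP z0]; first by right.
  left; split; last by rewrite /= normrZ normfV normr_id mulVf // normr_eq0.
  rewrite -ZE; have [ZZ0 ZL] := HZ; have := ZL (`|z|^-1) z 0 Zz ZZ0.
  by rewrite addr0.
have key : 2 - eps <= `|zh + T yh|.
  have E : p i + T (q j) = (zh + T yh) - (zh - p i) - T (yh - q j).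
    by rewrite [T (yh - q j)]linearB /= (rearr _ zh (T yh)).
  have h1 := HT i j; rewrite E in h1.
  have h2 := Tle (yh - q j).
  have h3 : `|zh + T yh - (zh - p i) - T (yh - q j)| <= `|zh + T yh| + `|zh - p i| + `|T (yh - q j)|.
    apply: (le_trans (ler_normB _ _)); rewrite lerD2r; exact: ler_normB.
  rewrite /del in hj hi h1; lra.
have hw : `|T yh| <= 1 by rewrite (le_trans (Tle _)) // nyh.
have := est zh (T yh) (`|z|) (`|y|) eps (eq_ind_r (fun t => t <= 1) (lexx 1) nzh) hw key (normr_ge0 _) (normr_ge0 _) (ltW e0).
have -> : `|z| *: zh = z.
  rewrite /zh; case: eqP => [->|/eqP z0]; first by rewrite normr0 scale0r.
  by rewrite scalerA mulfV ?scale1r // normr_eq0.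
have -> : `|y| *: T yh = T y by rewrite -linearZ /= /yh scalerA mulfV ?scale1r // (gt_eqF nyp).
by rewrite mulrC.
Qed.
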